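(* Let $(X,d,\kappa)$ be a digital metric space with $X$ finite, and let $T:X\to X$ be a weakly uniformly strict digital contraction. Then $T$ is a digital contraction map, i.e., there exists $\alpha\in(0,1)$ such that $d(T(x),T(y))\le\alpha\,d(x,y)$ for all $x,y\in X$.
   Context: A digital metric space is a triple $(X,d,\kappa)$ where $X\subset\mathbb{Z}^n$ for some positive integer $n$, $\kappa$ is an adjacency relation on $X$, and $d$ is a metric on $X$. $T:X\to X$ is a weakly uniformly strict digital contraction if for every $\varepsilon>0$ there exists $\delta>0$ such that for all $x,y\in X$, $\varepsilon\le d(x,y)<\varepsilon+\delta$ implies $d(T(x),T(y))<\varepsilon$. *)

(* Defs.v *)
From Stdlib Require Import Reals ZArith List.
Open Scope R_scope.

Definition in_Zn (n : nat) (p : list Z) : Prop := length p = n.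

Definition is_metric_on (X : list Z -> Prop) (d : list Z -> list Z -> R) : Prop :=
  (forall x y, X x -> X y -> 0 <= d x y) /\
  (forall x y, X x -> X y -> (d x y = 0 <-> x = y)) /\
  (forall x y, X x -> X y -> d x y = d y x) /\
  (forall x y z, X x -> X y -> X z -> d x z <= d x y + d y z).

Definition digital_metric_space (n : nat) (X : list Z -> Prop)
  (d : list Z -> list Z -> R) (kappa : list Z -> list Z -> Prop) : Prop :=
  (0 < n)%nat /\
  (forall x, X x -> in_Zn n x) /\
  (forall x y, X x -> X y -> kappa x y -> kappa y x) /\
  (forall x, X x -> ~ kappa x x) /\
  is_metric_on X d.

Definition maps_into (X : list Z -> Prop) (T : list Z -> list Z) : Prop :=
  forall x, X x -> X (T x).

Definition finite_set (X : list Z -> Prop) : Prop :=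
  exists l : list (list Z), forall x, X x <-> In x l.

Definition weakly_uniformly_strict_digital_contraction
  (X : list Z -> Prop) (d : list Z -> list Z -> R) (T : list Z -> list Z) : Prop :=
  forall eps, 0 < eps -> exists delta, 0 < delta /\
    forall x y, X x -> X y -> eps <= d x y -> d x y < eps + delta ->
      d (T x) (T y) < eps.

Definition digital_contraction_map
  (X : list Z -> Prop) (d : list Z -> list Z -> R) (T : list Z -> list Z) : Prop :=
  exists alpha, 0 < alpha < 1 /\
    forall x y, X x -> X y -> d (T x) (T y) <= alpha * d x y.

(* Main.v *)
Require Import Defs.
From Stdlib Require Import Reals ZArith List Lra.
Open Scope R_scope.

Lemma combine_alpha {A : Type} (Q : R -> A -> Prop)
  (mono : forall a b p, a <= b -> b < 1 -> Q a p -> Q b p) :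
  forall L : list A, (forall p, In p L -> exists a, 0 < a < 1 /\ Q a p) ->
  exists a, 0 < a < 1 /\ forall p, In p L -> Q a p.
Proof.
  induction L as [|p L IH]; intros H.
  - exists (1/2). split; [lra| intros p []].
  - destruct (H p (or_introl eq_refl)) as [a [Ha Qa]].
    destruct IH as [b [Hb Qb]]. { intros q Hq. apply H. right. exact Hq. }
    exists (Rmax a b). split.
    + split; [apply Rlt_le_trans with a; [lra|apply Rmax_l]|].
      apply Rmax_lub_lt; lra.
    + assert (Rmax a b < 1) by (apply Rmax_lub_lt; lra).
      intros q [<-|Hq].
      * apply mono with a; auto. apply Rmax_l.
      * apply mono with b; auto. apply Rmax_r.
Qed.

Theorem corollary8p3 (n : nat) (X : list Z -> Prop)
  (d : list Z -> list Z -> R) (kappa : list Z -> list Z -> Prop)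
  (T : list Z -> list Z) :
  digital_metric_space n X d kappa ->
  finite_set X ->
  maps_into X T ->
  weakly_uniformly_strict_digital_contraction X d T ->
  digital_contraction_map X d T.
Proof.
  intros [_ [_ [_ [_ [Hpos [Hzero [Hsym Htri]]]]]]] [l Hl] HT HW.
  set (Q := fun a (p : list Z * list Z) =>
        X (fst p) -> X (snd p) -> d (T (fst p)) (T (snd p)) <= a * d (fst p) (snd p)).
  destruct (combine_alpha Q) with (L := list_prod l l) as [a [Ha HQ]].
  - intros a b [x y] Hab Hb1 Hq Hx Hy. unfold Q in *; simpl in *.
    specialize (Hq Hx Hy). specialize (Hpos x y Hx Hy).
    apply Rle_trans with (1 := Hq). apply Rmult_le_compat_r; lra.
  - intros [x y] Hin. apply in_prod_iff in Hin. destruct Hin as [Hx Hy].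
    apply Hl in Hx. apply Hl in Hy.
    destruct (list_eq_dec Z.eq_dec x y) as [<-|Hne].
    + exists (1/2). split; [lra|]. intros _ _; simpl.
      rewrite (proj2 (Hzero (T x) (T x) (HT x Hx) (HT x Hx)) eq_refl).
      rewrite (proj2 (Hzero x x Hx Hx) eq_refl). lra.
    + assert (Hd : 0 < d x y).
      { destruct (Rle_lt_or_eq_dec 0 (d x y) (Hpos x y Hx Hy)) as [h|h]; auto.
        exfalso. apply Hne. apply Hzero; auto. }
      destruct (HW (d x y) Hd) as [delta [Hdel Hc]].
      assert (Hlt : d (T x) (T y) < d x y) by (apply Hc; auto; lra).
      assert (H0 : 0 <= d (T x) (T y)) by (apply Hpos; apply HT; auto).
      set (r := d (T x) (T y) / d x y).
      assert (Hr : d (T x) (T y) = r * d x y) by (unfold r; field; lra).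
      assert (Hr0 : 0 <= r) by (unfold r; unfold Rdiv; apply Rmult_le_pos; [lra|left; apply Rinv_0_lt_compat; lra]).
      assert (Hr1 : r < 1).
      { apply Rmult_lt_reg_r with (d x y); lra. }
      exists ((r + 1) / 2). split; [lra|]. intros _ _; simpl.
      rewrite Hr. apply Rmult_le_compat_r; lra.
  - exists a. split; auto. intros x y Hx Hy.
    apply (HQ (x, y)); auto. apply in_prod; apply Hl; auto.
Qed.
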